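(* Let $X:[0,S]\to\mathbb R$ be any function, $c>0$, $m_0\ge0$ an integer, and let $\Pi_n=\{t_0,\dots,t_n\}$ with $0\le t_0<t_1<\dots<t_n\le S$. Let $N_0\ge m_0$ be such that $J_m=\emptyset$ for all $m\ge N_0$, and let $N\ge N_0$, $N>m_0$. Then $$\sum_{i=1}^n(|X(t_i)-X(t_{i-1})|-c)_+\le V_1+V_2+W_1+W_2+\sum_{i=1}^n\sum_{s\in\{i-1,i\}}|X(t_s)-X(t_s^{N+1})|,$$ where $V_1=\sum_{m=0}^{m_0}\sum_{i\in J_m}\sum_{l=m+1}^{m_0}\sum_{s\in\{i-1,i\}}|X(t_s^l)-X(t_s^{l+1})|$, $W_1=\sum_{m=0}^{m_0}\sum_{i\in J_m}|X(t_i^{m+1})-X(t_{i-1}^{m+1})|$, $V_2=\sum_{m=0}^{\infty}\sum_{i\in J_m}\sum_{l=\bar m+1}^{N}\sum_{s\in\{i-1,i\}}\left(|X(t_s^l)-X(t_s^{l+1})|-2^{-l+\bar m}\frac c3\right)_+$, $W_2=\sum_{m=m_0+1}^{\infty}\sum_{i\in J_m}\left(|X(t_i^{m+1})-X(t_{i-1}^{m+1})|-\frac c3\right)_+$.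
   Context: Fix $S>0$, $q\in(0,1)$, $d(s,t)=|s-t|^q$ on $[0,S]$, and $r\ge4$. For $n\ge0$ let $T_n=\{kr^{-n/q}S:k=0,1,2,\dots\}\cap[0,S]$ and $\pi_n(t)=\max\{s\in T_n:s\le t\}$ for $t\in[0,S]$. For the partition $\Pi_n$ and $m=0,1,2,\dots$ let $J_m=\{i\in\{1,\dots,n\}:r^{-m-1}S^q<d(t_{i-1},t_i)\le r^{-m}S^q\}$. Given $N$, define $t_i^{N+1}=\pi_{N+1}(t_i)$ and recursively $t_i^l=\pi_l(t_i^{l+1})$ for $l=N,N-1,\dots,0$, $i=0,\dots,n$. Write $\bar m=\max\{m,m_0\}$ and $x_+=\max\{x,0\}$. *)

(* Defs.v *)
From Stdlib Require Import Reals Lra Lia List.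
Open Scope R_scope.

(* sum_range lo hi f = f lo + ... + f hi  (0 if hi < lo) *)
Definition sum_range (lo hi : nat) (f : nat -> R) : R :=
  fold_right (fun k acc => f k + acc) 0 (seq lo (S hi - lo)).

Definition pos_part (x : R) : R := Rmax x 0.

Definition dist_q (q s t : R) : R := Rpower (Rabs (s - t)) q.

Definition in_T (Sx q r : R) (n : nat) (s : R) : Prop :=
  (exists k : nat, s = INR k * Rpower r (- INR n / q) * Sx) /\ 0 <= s <= Sx.

Definition is_pi (Sx q r : R) (n : nat) (t p : R) : Prop :=
  in_T Sx q r n p /\ p <= t /\ (forall s, in_T Sx q r n s -> s <= t -> s <= p).

Definition J_lo (Sx q r : R) (m : nat) : R := Rpower Sx q / r ^ (S m).
Definition J_hi (Sx q r : R) (m : nat) : R := Rpower Sx q / r ^ m.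

(* boolean membership i ∈ J_m for the partition t (range 1..n handled by sums) *)
Definition in_Jb (Sx q r : R) (t : nat -> R) (m i : nat) : bool :=
  if Rlt_dec (J_lo Sx q r m) (dist_q q (t (pred i)) (t i)) then
    if Rle_dec (dist_q q (t (pred i)) (t i)) (J_hi Sx q r m) then true else false
  else false.

Definition sum_J (Sx q r : R) (t : nat -> R) (n m : nat) (f : nat -> R) : R :=
  sum_range 1 n (fun i => if in_Jb Sx q r t m i then f i else 0).

Fixpoint down (pi : nat -> R -> R) (j top : nat) (y : R) : R :=
  match j with
  | O => y
  | S j' => pi (top - S j')%nat (down pi j' top y)
  end.

(* t^l for x = t_i: t^{N+1} = pi_{N+1}(x), t^l = pi_l(t^{l+1}) for l <= N *)
Definition tlev (pi : nat -> R -> R) (N : nat) (x : R) (l : nat) : R :=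
  down pi (S N - l) (S N) (pi (S N) x).

Definition sum_s (i : nat) (g : nat -> R) : R := g (pred i) + g i.

(* Main.v *)
Require Import Defs.
From Stdlib Require Import Reals Lra Lia List.
Open Scope R_scope.

Definition lsum (l : list nat) (f : nat -> R) : R :=
  fold_right (fun k acc => f k + acc) 0 l.

Lemma sr (lo hi : nat) f : sum_range lo hi f = lsum (seq lo (S hi - lo)) f.
Proof. reflexivity. Qed.

Lemma lsum_app l1 l2 f : lsum (l1 ++ l2) f = lsum l1 f + lsum l2 f.
Proof. induction l1; simpl; [lra| rewrite IHl1; lra]. Qed.

Lemma lsum_plus l f g : lsum l (fun k => f k + g k) = lsum l f + lsum l g.
Proof. induction l; simpl; [lra| rewrite IHl; lra]. Qed.

Lemma lsum_le l f g : (forall k, In k l -> f k <= g k) -> lsum l f <= lsum l g.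
Proof.
  induction l; simpl; intros H; [lra|].
  pose proof (H a (or_introl eq_refl)).
  assert (lsum l f <= lsum l g) by (apply IHl; auto). lra.
Qed.

Lemma lsum_nonneg l f : (forall k, In k l -> 0 <= f k) -> 0 <= lsum l f.
Proof.
  induction l; simpl; intros H; [lra|].
  pose proof (H a (or_introl eq_refl)).
  assert (0 <= lsum l f) by (apply IHl; auto). lra.
Qed.

Lemma lsum_term l f k : In k l -> (forall j, In j l -> 0 <= f j) -> f k <= lsum l f.
Proof.
  induction l; simpl; intros Hk H; [contradiction|].
  destruct Hk as [<-|Hk].
  - assert (0 <= lsum l f) by (apply lsum_nonneg; auto). lra.
  - pose proof (H a (or_introl eq_refl)).
    assert (f k <= lsum l f) by (apply IHl; auto). lra.
Qed.

Lemma lsum_swap l1 l2 (g : nat -> nat -> R) :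
  lsum l1 (fun m => lsum l2 (g m)) = lsum l2 (fun i => lsum l1 (fun m => g m i)).
Proof.
  induction l1; simpl.
  - induction l2; simpl; [reflexivity| rewrite <- IHl2; lra].
  - rewrite IHl1. rewrite <- lsum_plus. reflexivity.
Qed.

Lemma sr_swap a b c d (g : nat -> nat -> R) :
  sum_range a b (fun m => sum_range c d (g m)) =
  sum_range c d (fun i => sum_range a b (fun m => g m i)).
Proof. apply (lsum_swap _ _ g). Qed.

Lemma sr_plus a b f g : sum_range a b (fun k => f k + g k) = sum_range a b f + sum_range a b g.
Proof. apply lsum_plus. Qed.

Lemma sr_le a b f g : (forall k, (a <= k <= b)%nat -> f k <= g k) ->
  sum_range a b f <= sum_range a b g.
Proof. intros H. apply lsum_le. intros k Hk. apply in_seq in Hk. apply H. lia. Qed.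

Lemma sr_nonneg a b f : (forall k, (a <= k <= b)%nat -> 0 <= f k) -> 0 <= sum_range a b f.
Proof. intros H. apply lsum_nonneg. intros k Hk. apply in_seq in Hk. apply H. lia. Qed.

Lemma sr_term a b f k : (a <= k <= b)%nat -> (forall j, (a <= j <= b)%nat -> 0 <= f j) ->
  f k <= sum_range a b f.
Proof.
  intros Hk H. apply lsum_term. apply in_seq; lia.
  intros j Hj. apply in_seq in Hj. apply H. lia.
Qed.

Lemma sr_split lo mid hi f : (lo <= S mid)%nat -> (mid <= hi)%nat ->
  sum_range lo hi f = sum_range lo mid f + sum_range (S mid) hi f.
Proof.
  intros H1 H2. rewrite !sr.
  replace (S hi - lo)%nat with ((S mid - lo) + (S hi - S mid))%nat by lia.
  rewrite seq_app, lsum_app.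
  replace (lo + (S mid - lo))%nat with (S mid) by lia. reflexivity.
Qed.

Lemma telescope (y : nat -> R) j lo :
  Rabs (y (lo + j)%nat - y lo) <= lsum (seq lo j) (fun l => Rabs (y l - y (S l))).
Proof.
  revert lo; induction j; intros lo; simpl.
  - rewrite Nat.add_0_r. unfold Rminus. rewrite Rplus_opp_r, Rabs_R0. lra.
  - specialize (IHj (S lo)). replace (lo + S j)%nat with (S lo + j)%nat by lia.
    pose proof (Rabs_triang (y (S lo + j)%nat - y (S lo)) (y (S lo) - y lo)).
    replace (y (S lo + j)%nat - y (S lo) + (y (S lo) - y lo)) with
      (y (S lo + j)%nat - y lo) in H by ring.
    rewrite (Rabs_minus_sym (y (S lo))) in H. lra.
Qed.

Lemma sr_telescope (y : nat -> R) m N : (m <= N)%nat ->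
  Rabs (y (S N) - y (S m)) <= sum_range (S m) N (fun l => Rabs (y l - y (S l))).
Proof.
  intros H. rewrite sr. pose proof (telescope y (S N - S m) (S m)).
  replace (S m + (S N - S m))%nat with (S N) in H0 by lia. exact H0.
Qed.

Definition pos_ge0 x : 0 <= pos_part x.
Proof. unfold pos_part. apply Rmax_r. Qed.
Definition pos_ge x : x <= pos_part x.
Proof. unfold pos_part. apply Rmax_l. Qed.

Lemma geom k j C : lsum (seq (S k) j) (fun l => 2 ^ k / 2 ^ l * C) = C * (1 - / 2 ^ j).
Proof.
  induction j.
  - simpl. field.
  - rewrite seq_S, lsum_app, IHj. simpl.
    replace (S (k + j)) with (S k + j)%nat by lia.
    rewrite pow_add. simpl.
    assert (2 ^ k <> 0) by (apply pow_nonzero; lra).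
    assert (2 ^ j <> 0) by (apply pow_nonzero; lra).
    field. auto.
Qed.

Lemma geom_le k N C : 0 <= C -> sum_range (S k) N (fun l => 2 ^ k / 2 ^ l * C) <= C.
Proof.
  intros HC. rewrite sr, geom.
  assert (0 < / 2 ^ (S N - S k)) by (apply Rinv_0_lt_compat, pow_lt; lra).
  nra.
Qed.

Lemma Gbound (a : nat -> R) k N c : 0 < c ->
  sum_range (S k) N a <=
  sum_range (S k) N (fun l => pos_part (a l - 2 ^ k / 2 ^ l * (c / 3))) + c / 3.
Proof.
  intros Hc.
  apply Rle_trans with (sum_range (S k) N (fun l => pos_part (a l - 2 ^ k / 2 ^ l * (c / 3))
     + 2 ^ k / 2 ^ l * (c / 3))).
  - apply sr_le. intros l _. pose proof (pos_ge (a l - 2 ^ k / 2 ^ l * (c / 3))). lra.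
  - rewrite sr_plus. pose proof (geom_le k N (c/3)). lra.
Qed.

Lemma basic (x0 x1 : R) (y0 y1 : nat -> R) m N : (m <= N)%nat ->
  Rabs (x1 - x0) <= Rabs (x0 - y0 (S N)) + Rabs (x1 - y1 (S N)) + Rabs (y1 (S m) - y0 (S m))
    + sum_range (S m) N (fun l => Rabs (y0 l - y0 (S l)))
    + sum_range (S m) N (fun l => Rabs (y1 l - y1 (S l))).
Proof.
  intros H.
  pose proof (sr_telescope y0 m N H). pose proof (sr_telescope y1 m N H).
  assert (T: forall a b c d e : R, Rabs (a + b + c + d + e) <= Rabs a + Rabs b + Rabs c + Rabs d + Rabs e).
  { intros. repeat (eapply Rle_trans; [apply Rabs_triang|apply Rplus_le_compat_r]). lra. }
  pose proof (T (x1 - y1 (S N)) (y1 (S N) - y1 (S m)) (y1 (S m) - y0 (S m))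
     (y0 (S m) - y0 (S N)) (y0 (S N) - x0)) as T'.
  replace (x1 - y1 (S N) + (y1 (S N) - y1 (S m)) + (y1 (S m) - y0 (S m)) +
     (y0 (S m) - y0 (S N)) + (y0 (S N) - x0)) with (x1 - x0) in T' by ring.
  rewrite (Rabs_minus_sym (y0 (S m))), (Rabs_minus_sym (y0 (S N)) x0) in T'. lra.
Qed.

Lemma core1 (x0 x1 : R) (y0 y1 : nat -> R) m m0 N c : 0 < c -> (m <= m0)%nat -> (m0 < N)%nat ->
  pos_part (Rabs (x1 - x0) - c) <=
  sum_range (S m) m0 (fun l => Rabs (y0 l - y0 (S l)) + Rabs (y1 l - y1 (S l)))
  + sum_range (S m0) N (fun l => pos_part (Rabs (y0 l - y0 (S l)) - 2^m0/2^l*(c/3))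
                              + pos_part (Rabs (y1 l - y1 (S l)) - 2^m0/2^l*(c/3)))
  + Rabs (y1 (S m) - y0 (S m))
  + (Rabs (x0 - y0 (S N)) + Rabs (x1 - y1 (S N))).
Proof.
  intros Hc H1 H2.
  pose proof (basic x0 x1 y0 y1 m N ltac:(lia)) as B.
  rewrite (sr_split (S m) m0 N) in B by lia.
  rewrite (sr_split (S m) m0 N) in B by lia.
  pose proof (Gbound (fun l => Rabs (y0 l - y0 (S l))) m0 N c Hc).
  pose proof (Gbound (fun l => Rabs (y1 l - y1 (S l))) m0 N c Hc).
  rewrite !sr_plus.
  apply Rmax_lub.
  - lra.
  - assert (0 <= sum_range (S m) m0 (fun l => Rabs (y0 l - y0 (S l)))) by (apply sr_nonneg; intros; apply Rabs_pos).
    assert (0 <= sum_range (S m) m0 (fun l => Rabs (y1 l - y1 (S l)))) by (apply sr_nonneg; intros; apply Rabs_pos).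
    assert (0 <= sum_range (S m0) N (fun l => pos_part (Rabs (y0 l - y0 (S l)) - 2^m0/2^l*(c/3)))) by (apply sr_nonneg; intros; apply pos_ge0).
    assert (0 <= sum_range (S m0) N (fun l => pos_part (Rabs (y1 l - y1 (S l)) - 2^m0/2^l*(c/3)))) by (apply sr_nonneg; intros; apply pos_ge0).
    pose proof (Rabs_pos (y1 (S m) - y0 (S m))).
    pose proof (Rabs_pos (x0 - y0 (S N))). pose proof (Rabs_pos (x1 - y1 (S N))). lra.
Qed.

Lemma core2 (x0 x1 : R) (y0 y1 : nat -> R) m N c : 0 < c -> (m <= N)%nat ->
  pos_part (Rabs (x1 - x0) - c) <=
  sum_range (S m) N (fun l => pos_part (Rabs (y0 l - y0 (S l)) - 2^m/2^l*(c/3))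
                              + pos_part (Rabs (y1 l - y1 (S l)) - 2^m/2^l*(c/3)))
  + pos_part (Rabs (y1 (S m) - y0 (S m)) - c / 3)
  + (Rabs (x0 - y0 (S N)) + Rabs (x1 - y1 (S N))).
Proof.
  intros Hc H1.
  pose proof (basic x0 x1 y0 y1 m N ltac:(lia)) as B.
  pose proof (Gbound (fun l => Rabs (y0 l - y0 (S l))) m N c Hc).
  pose proof (Gbound (fun l => Rabs (y1 l - y1 (S l))) m N c Hc).
  pose proof (pos_ge (Rabs (y1 (S m) - y0 (S m)) - c / 3)).
  rewrite !sr_plus.
  apply Rmax_lub.
  - lra.
  - assert (0 <= sum_range (S m) N (fun l => pos_part (Rabs (y0 l - y0 (S l)) - 2^m/2^l*(c/3)))) by (apply sr_nonneg; intros; apply pos_ge0).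
    assert (0 <= sum_range (S m) N (fun l => pos_part (Rabs (y1 l - y1 (S l)) - 2^m/2^l*(c/3)))) by (apply sr_nonneg; intros; apply pos_ge0).
    pose proof (pos_ge0 (Rabs (y1 (S m) - y0 (S m)) - c / 3)).
    pose proof (Rabs_pos (x0 - y0 (S N))). pose proof (Rabs_pos (x1 - y1 (S N))). lra.
Qed.

Lemma Jfind A r (Hr : 1 < r) k d : d <= A -> A / r ^ (S k) < d ->
  exists m, (m <= k)%nat /\ A / r ^ (S m) < d /\ d <= A / r ^ m.
Proof.
  induction k; intros H1 H2.
  - exists O. split; [lia|]. split; [auto|]. simpl. rewrite Rdiv_1_r. auto.
  - destruct (Rlt_dec (A / r ^ (S k)) d) as [h|h].
    + destruct (IHk H1 h) as [m [? ?]]. exists m. split; [lia|auto].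
    + exists (S k). split; [lia|]. split; [auto|lra].
Qed.

Lemma pow_ge_INR r n : 4 <= r -> INR n <= r ^ n.
Proof.
  intros Hr. induction n.
  - simpl. lra.
  - rewrite S_INR. simpl. pose proof (pow_R1_Rle r n ltac:(lra)). nra.
Qed.

Lemma Jexists A r d : 4 <= r -> 0 < A -> 0 < d -> d <= A ->
  exists m, A / r ^ (S m) < d /\ d <= A / r ^ m.
Proof.
  intros Hr HA Hd H.
  destruct (archimed_cor1 (d / A)) as [K [HK1 HK2]].
  { apply Rdiv_lt_0_compat; auto. }
  assert (HK: 0 < INR K) by (apply lt_0_INR; lia).
  assert (A / r ^ (S K) < d).
  { pose proof (pow_ge_INR r (S K) Hr). rewrite S_INR in H0.
    apply Rle_lt_trans with (A / INR K).
    - unfold Rdiv. apply Rmult_le_compat_l; [lra|]. apply Rinv_le_contravar; lra.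
    - apply Rmult_lt_compat_r with (r := A) in HK1; auto.
      unfold Rdiv in *. rewrite Rmult_assoc, Rinv_l in HK1 by lra. lra. }
  destruct (Jfind A r ltac:(lra) K d H H0) as [m [_ Hm]]. eauto.
Qed.

Ltac nn := intros; cbv beta; try (match goal with |- context [if ?b then _ else _] => destruct b; [|lra] end);
  repeat (apply sr_nonneg; intros); unfold sum_s;
  repeat match goal with |- 0 <= _ + _ => apply Rplus_le_le_0_compat end;
  first [apply Rabs_pos | apply pos_ge0].

Theorem lemma1
  (Sx q r : R) (HS : 0 < Sx) (Hq : 0 < q < 1) (Hr : 4 <= r)
  (pi : nat -> R -> R)
  (Hpi : forall (k : nat) (x : R), 0 <= x <= Sx -> is_pi Sx q r k x (pi k x))
  (X : R -> R) (c : R) (Hc : 0 < c) (m0 : nat)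
  (n : nat) (t : nat -> R)
  (Ht0 : 0 <= t O) (Htn : t n <= Sx)
  (Hinc : forall i, (1 <= i <= n)%nat -> t (pred i) < t i)
  (N0 : nat) (HN0 : (m0 <= N0)%nat)
  (HJ : forall m i, (N0 <= m)%nat -> (1 <= i <= n)%nat ->
        ~ (J_lo Sx q r m < dist_q q (t (pred i)) (t i) /\
           dist_q q (t (pred i)) (t i) <= J_hi Sx q r m))
  (N : nat) (HN : (N0 <= N)%nat) (HNm : (m0 < N)%nat) :
  let tl := fun (i l : nat) => tlev pi N (t i) l in
  let mbar := fun m : nat => Nat.max m m0 in
  let V1 := sum_range 0 m0 (fun m => sum_J Sx q r t n m (fun i =>
              sum_range (S m) m0 (fun l => sum_s i (fun s =>
                Rabs (X (tl s l) - X (tl s (S l))))))) in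
  let W1 := sum_range 0 m0 (fun m => sum_J Sx q r t n m (fun i =>
              Rabs (X (tl i (S m)) - X (tl (pred i) (S m))))) in
  let V2 := sum_range 0 N0 (fun m => sum_J Sx q r t n m (fun i =>
              sum_range (S (mbar m)) N (fun l => sum_s i (fun s =>
                pos_part (Rabs (X (tl s l) - X (tl s (S l)))
                          - 2 ^ (mbar m) / 2 ^ l * (c / 3)))))) in
  let W2 := sum_range (S m0) N0 (fun m => sum_J Sx q r t n m (fun i =>
              pos_part (Rabs (X (tl i (S m)) - X (tl (pred i) (S m))) - c / 3))) in
  sum_range 1 n (fun i => pos_part (Rabs (X (t i) - X (t (pred i))) - c))
  <= V1 + V2 + W1 + W2
     + sum_range 1 n (fun i => sum_s i (fun s => Rabs (X (t s) - X (tl s (S N))))).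
Proof.
  intros tl mbar V1 W1 V2 W2. unfold V1, W1, V2, W2, sum_J.
  rewrite (sr_swap 0 m0 1 n), (sr_swap 0 m0 1 n), (sr_swap 0 N0 1 n), (sr_swap (S m0) N0 1 n).
  rewrite <- !sr_plus.
  apply sr_le. intros i Hi. cbv beta.
  assert (Hlow : forall j, (j <= n)%nat -> t O <= t j).
  { induction j; intros Hj; [lra|]. pose proof (Hinc (S j) ltac:(lia)). simpl in H.
    specialize (IHj ltac:(lia)). lra. }
  assert (Hup : forall k, (k <= n)%nat -> t (n - k)%nat <= t n).
  { induction k; intros Hk. { rewrite Nat.sub_0_r. lra. }
    pose proof (Hinc (n - k)%nat ltac:(lia)).
    replace (pred (n - k)) with (n - S k)%nat in H by lia.
    specialize (IHk ltac:(lia)). lra. }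
  assert (Hti : t i <= Sx).
  { pose proof (Hup (n - i)%nat ltac:(lia)). replace (n - (n - i))%nat with i in H by lia. lra. }
  assert (Htp : 0 <= t (pred i)) by (pose proof (Hlow (pred i) ltac:(lia)); lra).
  pose proof (Hinc i Hi) as Hpi'.
  set (d := dist_q q (t (pred i)) (t i)).
  assert (Hd0 : 0 < d).
  { unfold d, dist_q, Rpower. apply exp_pos. }
  assert (Hd1 : d <= Rpower Sx q).
  { unfold d, dist_q. apply Rle_Rpower_l; [lra|]. rewrite Rabs_minus_sym.
    rewrite Rabs_right by lra. lra. }
  assert (HA : 0 < Rpower Sx q) by (unfold Rpower; apply exp_pos).
  destruct (Jexists (Rpower Sx q) r d Hr HA Hd0 Hd1) as [m [Hm1 Hm2]].
  assert (Hin : in_Jb Sx q r t m i = true).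
  { unfold in_Jb. fold d. unfold J_lo, J_hi in *.
    destruct (Rlt_dec _ _); [|contradiction]. destruct (Rle_dec _ _); [reflexivity|contradiction]. }
  assert (HmN : (m < N0)%nat).
  { destruct (Nat.lt_ge_cases m N0) as [h|h]; auto. exfalso. apply (HJ m i h Hi).
    unfold J_lo, J_hi. fold d. auto. }
  match goal with |- _ <= sum_range 0 m0 ?f1 + sum_range 0 N0 ?f2 + sum_range 0 m0 ?f3
        + sum_range (S m0) N0 ?f4 + ?e =>
    assert (P1 : 0 <= sum_range 0 m0 f1) by (apply sr_nonneg; nn);
    assert (P2 : 0 <= sum_range 0 N0 f2) by (apply sr_nonneg; nn);
    assert (P3 : 0 <= sum_range 0 m0 f3) by (apply sr_nonneg; nn);
    assert (P4 : 0 <= sum_range (S m0) N0 f4) by (apply sr_nonneg; nn);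
    assert (Q2 : f2 m <= sum_range 0 N0 f2) by (apply (sr_term 0 N0 f2 m); [lia|nn]);
    destruct (Nat.le_gt_cases m m0) as [Hmm|Hmm];
    [ assert (Q1 : f1 m <= sum_range 0 m0 f1) by (apply (sr_term 0 m0 f1 m); [lia|nn]);
      assert (Q3 : f3 m <= sum_range 0 m0 f3) by (apply (sr_term 0 m0 f3 m); [lia|nn])
    | assert (Q4 : f4 m <= sum_range (S m0) N0 f4) by (apply (sr_term (S m0) N0 f4 m); [lia|nn]) ]
  end.
  - cbv beta in Q1, Q2, Q3. rewrite Hin in Q1, Q2, Q3.
    replace (mbar m) with m0 in Q2 by (unfold mbar; lia).
    pose proof (core1 (X (t (pred i))) (X (t i)) (fun l => X (tl (pred i) l))
       (fun l => X (tl i l)) m m0 N c Hc Hmm HNm) as C.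
    cbv beta in C. unfold sum_s in *. lra.
  - cbv beta in Q2, Q4. rewrite Hin in Q2, Q4.
    replace (mbar m) with m in Q2 by (unfold mbar; lia).
    pose proof (core2 (X (t (pred i))) (X (t i)) (fun l => X (tl (pred i) l))
       (fun l => X (tl i l)) m N c Hc ltac:(lia)) as C.
    cbv beta in C. unfold sum_s in *. lra.
Qed.
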